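(* Let $(\mathbb S,+,\cdot)$ be an S-Field. Then $(\mathbb S_0,+,\cdot)$ (operations restricted to $\mathbb S_0$) forms a Field with Unity $1$, where $e=1$ is the Unity of $(\mathbb S,+,\cdot)$.
   Context: An S-Structure is a triple $(\mathbb S,+,\cdot)$ where $\mathbb S$ is a set and $+,\cdot$ are binary operations on $\mathbb S$ such that: $(\mathbb S,+)$ is a commutative group with identity $0$ (the inverse of $s$ is written $-s$, and $s-t:=s+(-t)$); $\mathbb S$ is closed under $\cdot$; and there exists $s\in\mathbb S$ with $0\cdot s\neq 0$ or $s\cdot 0\neq 0$. Multiplication binds tighter than addition. The structures considered come with a distinguished element of $\mathbb S$ denoted $1$. It is Commutative if $s\cdot t=t\cdot s$ for all $s,t$. For a Commutative S-Structure and $\alpha\in\mathbb S$, put $\mathbb S_\alpha=\{s\in\mathbb S:0\cdot s=s\cdot 0=\alpha\}$ and $\Lambda=\{\alpha\in\mathbb S:\mathbb S_\alpha\neq\emptyset\}$. Wheel Distributive: $s\cdot(t+r)+(s\cdot 0)=(s\cdot t)+(s\cdot r)$ for all $s,t,r\in\mathbb S$. S-Associative: for all $m,n\in\mathbb S_0$ and $s\in\mathbb S$, $m\cdot(n\cdot s)=(m\cdot n)\cdot s-([(m-1)\cdot(n-1)]\cdot(0\cdot s))$. Base: if $\mathbb S_0\neq\emptyset$ and $\alpha\in\Lambda$, $q\in\mathbb S_\alpha$ is a Base for $\mathbb S_\alpha$ if $q+\beta\in\mathbb S_\alpha$ for all $\beta\in\mathbb S_0$ and every $s\in\mathbb S_\alpha$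 equals $q+\beta$ for some $\beta\in\mathbb S_0$. Coordinated: $\mathbb S_0\neq\emptyset$ and every $\mathbb S_\alpha$ with $\alpha\in\Lambda$ has a Base. Standard Bases: a Coordinated Commutative S-Structure has Standard Bases if there is a specified element $q_0(1)\in\mathbb S_1$ which is a Base for $\mathbb S_1$, and for every $\alpha\in\Lambda$ the element $q_0(\alpha):=\alpha\cdot(q_0(1)+1)-1$ lies in $\mathbb S_\alpha$ and is a Base for $\mathbb S_\alpha$. An Essential S-Structure is an S-Structure that is Commutative, Wheel Distributive, S-Associative, has Standard Bases (in particular is Coordinated), satisfies $0,1\in\mathbb S_0$, and satisfies $\mathbb S_0=\{1\cdot x:x\in\mathbb S_0\}$. A Unity is an element $e\in\Lambda$ with $e\cdot s=s\cdot e=s$ for all $s\in\mathbb S$. Scalar Inverses: the structure has a Unity $e$ and for every $x\in\mathbb S_0$ with $x\neq 0$ there is $x^{-1}\in\mathbb S_0$ with $x\cdot x^{-1}=x^{-1}\cdot x=e$. An S-Ring is an Essential S-Structure with a Unity; an S-Field is an S-Ring with Scalar Inverses. *)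

(* Defs.v *)
Record SSig := MkSSig {
  car  : Type;
  sadd : car -> car -> car;
  sopp : car -> car;
  szero : car;
  smul : car -> car -> car;
  sone : car
}.

Section SDefs.
Variable S : SSig.
Local Notation T := (car S).
Local Notation "x + y" := (sadd S x y).
Local Notation "- x" := (sopp S x).
Local Notation "x - y" := (sadd S x (sopp S y)).
Local Notation "x * y" := (smul S x y).
Local Notation "0" := (szero S).
Local Notation "1" := (sone S).

(* (S,+) is a commutative group with identity 0 and inverse -; S is closed
   under * (automatic, * : T -> T -> T); and 0*s <> 0 or s*0 <> 0 for some s. *)
Definition IsSStructure : Prop :=
  (forall x y z : T, x + (y + z) = (x + y) + z) /\
  (forall x y : T, x + y = y + x) /\
  (forall x : T, x + 0 = x) /\
  (forall x : T, x + (- x) = 0) /\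
  (exists s : T, 0 * s <> 0 \/ s * 0 <> 0).

Definition SCommutative : Prop := forall s t : T, s * t = t * s.

Definition S_ (alpha s : T) : Prop := 0 * s = alpha /\ s * 0 = alpha.

Definition Lam (alpha : T) : Prop := exists s : T, S_ alpha s.

Definition WheelDistributive : Prop :=
  forall s t r : T, s * (t + r) + (s * 0) = (s * t) + (s * r).

Definition SAssociative : Prop :=
  forall m n s : T, S_ 0 m -> S_ 0 n ->
    m * (n * s) = (m * n) * s - (((m - 1) * (n - 1)) * (0 * s)).

Definition IsBase (alpha q : T) : Prop :=
  S_ alpha q /\
  (forall beta : T, S_ 0 beta -> S_ alpha (q + beta)) /\
  (forall s : T, S_ alpha s -> exists beta : T, S_ 0 beta /\ s = q + beta).

Definition Coordinated : Prop :=
  (exists s : T, S_ 0 s) /\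
  (forall alpha : T, Lam alpha -> exists q : T, IsBase alpha q).

Definition StandardBases : Prop :=
  Coordinated /\
  exists q01 : T,
    IsBase 1 q01 /\
    forall alpha : T, Lam alpha ->
      S_ alpha (alpha * (q01 + 1) - 1) /\ IsBase alpha (alpha * (q01 + 1) - 1).

Definition Essential : Prop :=
  IsSStructure /\ SCommutative /\ WheelDistributive /\ SAssociative /\
  StandardBases /\ S_ 0 0 /\ S_ 0 1 /\
  (forall y : T, S_ 0 y <-> exists x : T, S_ 0 x /\ y = 1 * x).

Definition IsUnity (e : T) : Prop :=
  Lam e /\ forall s : T, e * s = s /\ s * e = s.

Definition ScalarInversesWrt (e : T) : Prop :=
  forall x : T, S_ 0 x -> x <> 0 ->
    exists xi : T, S_ 0 xi /\ x * xi = e /\ xi * x = e.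

Definition SRing : Prop := Essential /\ exists e : T, IsUnity e.

Definition SField : Prop :=
  Essential /\ exists e : T, IsUnity e /\ ScalarInversesWrt e.

Definition IsFieldOnWithUnity (P : T -> Prop) : Prop :=
  P 0 /\ P 1 /\
  (forall x y, P x -> P y -> P (x + y)) /\
  (forall x, P x -> P (- x)) /\
  (forall x y, P x -> P y -> P (x * y)) /\
  (forall x y z, P x -> P y -> P z -> x + (y + z) = (x + y) + z) /\
  (forall x y, P x -> P y -> x + y = y + x) /\
  (forall x, P x -> x + 0 = x) /\
  (forall x, P x -> x + (- x) = 0) /\
  (forall x y z, P x -> P y -> P z -> x * (y * z) = (x * y) * z) /\
  (forall x y, P x -> P y -> x * y = y * x) /\
  (forall x, P x -> 1 * x = x /\ x * 1 = x) /\
  (forall x y z, P x -> P y -> P z -> x * (y + z) = x * y + x * z) /\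
  (forall x y z, P x -> P y -> P z -> (x + y) * z = x * z + y * z) /\
  1 <> 0 /\
  (forall x, P x -> x <> 0 -> exists y, P y /\ x * y = 1 /\ y * x = 1).

End SDefs.

(* Main.v *)
Require Import Defs.

Theorem theorem3p3p1 (S : SSig) :
  SField S ->
  IsFieldOnWithUnity S (S_ S (szero S)) /\
  (forall e : car S, IsUnity S e -> e = sone S).
Proof.
  destruct S as [T add opp z mul one].
  unfold SField, Essential, IsSStructure, SCommutative, WheelDistributive,
    SAssociative, StandardBases, IsUnity, ScalarInversesWrt, IsFieldOnWithUnity,
    Lam, IsBase, S_; simpl.
  intros [[[Aa [Ac [A0 [Ainv Hex]]]] [Hc [Hwd [Hsa [Hsb [H00 [H01 Hsurj]]]]]]] [e0 [He0 Hinv0]]].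
  assert (A0l : forall x, add z x = x) by (intro x; rewrite Ac; apply A0).
  assert (Acan : forall a b c, add a b = add a c -> b = c).
  { intros a b c H. rewrite <- (A0l b), <- (A0l c), <- (Ainv a), (Ac a (opp a)),
      <- !Aa, H. reflexivity. }
  assert (Aopp : forall a b, add a b = z -> b = opp a).
  { intros a b H. apply (Acan a). rewrite H, Ainv. reflexivity. }
  assert (Aoo : forall a, opp (opp a) = a).
  { intro a. symmetry. apply Aopp. rewrite Ac. apply Ainv. }
  assert (Ao0 : opp z = z). { symmetry. apply Aopp. apply A0. }
  destruct H00 as [H00 _].
  assert (zadd : forall t r, mul z (add t r) = add (mul z t) (mul z r)).
  { intros t r. rewrite <- Hwd, H00, A0. reflexivity. }
  assert (zopp : forall t, mul z (opp t) = opp (mul z t)).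
  { intro t. apply Aopp. rewrite <- zadd, Ainv. exact H00. }
  destruct H01 as [H01 H10].
  assert (z1 : mul z (opp one) = z). { rewrite zopp, H01. exact Ao0. }
  assert (S0add : forall x y, mul z x = z /\ mul x z = z -> mul z y = z /\ mul y z = z ->
     mul z (add x y) = z /\ mul (add x y) z = z).
  { intros x y [Hx _] [Hy _]. assert (mul z (add x y) = z) by (rewrite zadd, Hx, Hy; apply A0).
    split; [|rewrite Hc]; assumption. }
  assert (S0opp : forall x, mul z x = z /\ mul x z = z ->
     mul z (opp x) = z /\ mul (opp x) z = z).
  { intros x [Hx _]. assert (mul z (opp x) = z) by (rewrite zopp, Hx; apply Ao0).
    split; [|rewrite Hc]; assumption. }
  destruct Hsb as [_ [q [[[Hq _] _] _]]].
  assert (H11 : mul one one = one).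
  { pose proof (Hsa one z q (conj H01 H10) (conj H00 H00)) as H.
    rewrite Hq, H10, Hq, Ainv, zadd, H00, z1, A0, H01, Ao0, A0 in H. exact H. }
  assert (Eone : forall e, ((exists s, mul z s = e /\ mul s z = e) /\
     (forall s, mul e s = s /\ mul s e = s)) -> e = one).
  { intros e [_ He].
    assert (Ee : mul z e = z /\ mul e z = z).
    { split; [apply He | apply He]. }
    destruct (proj1 (Hsurj e) Ee) as [x0 [Hx0 Hex0]].
    pose proof (Hsa x0 one one Hx0 (conj H01 H10)) as H.
    rewrite H11, Ainv, H01 in H.
    assert (Hw : mul (add x0 (opp one)) z = z).
    { rewrite Hc, zadd, (proj1 Hx0), z1. apply A0. }
    rewrite (Hc (add x0 (opp one)) z), zadd, (proj1 Hx0), z1, A0, H00, Ao0, A0 in H.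
    rewrite (Hc x0 one), <- Hex0, (proj1 (He one)) in H. exact H. }
  assert (Ee0 := Eone e0 He0). subst e0.
  split; [|exact Eone].
  destruct He0 as [_ Hu].
  assert (mopp : forall m t, mul z m = z /\ mul m z = z -> mul m (opp t) = opp (mul m t)).
  { intros m t [_ Hm]. apply Aopp. pose proof (Hwd m t (opp t)) as H.
    rewrite Ainv, Hm, A0 in H. symmetry; exact H. }
  assert (S0mul : forall x y, mul z x = z /\ mul x z = z -> mul z y = z /\ mul y z = z ->
     mul z (mul x y) = z /\ mul (mul x y) z = z).
  { intros x y Hx Hy.
    assert (Hw : mul z (mul x y) = z).
    { pose proof (Hsa z x y (conj H00 H00) Hx) as H.
      rewrite (proj1 Hx), (proj1 Hy), !A0l in H.
      rewrite (Hc (opp one) (add x (opp one))), mopp, (proj2 (Hu _)) in H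
        by (apply S0add; [exact Hx | apply S0opp; split; assumption]).
      rewrite (Hc (opp _) z), zopp, zadd, (proj1 Hx), z1, A0, !Ao0 in H.
      exact H. }
    split; [|rewrite Hc]; assumption. }
  split; [split; exact H00|].
  split; [split; assumption|].
  split; [intros x y Hx Hy; apply S0add; assumption|].
  split; [intros x Hx; apply S0opp; assumption|].
  split; [intros x y Hx Hy; apply S0mul; assumption|].
  split; [|split; [|split; [|split; [|split; [|split; [|split; [|split; [|split; [|split]]]]]]]]].
  - intros x y w _ _ _. apply Aa.
  - intros x y _ _. apply Ac.
  - intros x _. apply A0.
  - intros x _. apply Ainv.
  - intros x y w Hx Hy Hw. rewrite (Hsa x y w Hx Hy), (proj1 Hw).
    assert (Hm : mul z (mul (add x (opp one)) (add y (opp one))) = z /\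
                 mul (mul (add x (opp one)) (add y (opp one))) z = z).
    { apply S0mul; apply S0add; try assumption; apply S0opp; split; assumption. }
    rewrite (proj2 Hm), Ao0, A0. reflexivity.
  - intros x y _ _. apply Hc.
  - intros x _. apply Hu.
  - intros x y w Hx Hy Hw. rewrite <- Hwd, (proj2 Hx), A0. reflexivity.
  - intros x y w Hx Hy Hw. rewrite !(Hc _ w), <- Hwd, (proj2 Hw), A0. reflexivity.
  - intro E. destruct Hex as [s Hs].
    assert (Hzz : forall s, mul z (mul z s) = z).
    { intro t. pose proof (Hsa z z t (conj H00 H00) (conj H00 H00)) as H.
      rewrite H00, A0l, mopp, (proj2 (Hu _)), Aoo, (proj1 (Hu _)), Ainv in H
        by (apply S0opp; split; assumption). exact H. }
    assert (Hall : forall t, t = z).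
    { intro t. rewrite <- (Hzz t), <- E, (proj1 (Hu _)), (proj1 (Hu _)). reflexivity. }
    destruct Hs as [Hs|Hs]; apply Hs; apply Hall.
  - intros x Hx Hnz. destruct (Hinv0 x Hx Hnz) as [y [Hy [H1 H2]]]. exists y.
    repeat split; try apply Hy; assumption.
Qed.
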